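(* For every integer $t\ge 2$, every convex polygon whose vertices are points of $S_t$ has at most $t-1$ vertices.
   Context: For integers $r\ge 1$ let $\delta_r:=3\cdot 4^{r-1}$ and $\delta_r':=(3r+1)\cdot 4^{r-1}$. For positive integers $k,l$ define $S_{k,l}\subset\mathbb{Z}^2$ recursively: $S_{k,l}:=\{(0,0)\}$ if $k\le 2$ or $l\le 2$; otherwise $S_{k,l}:=S_{k-1,l}\cup\{(x+\delta_{k+l-1},\,y+\delta_{k+l-1}'):(x,y)\in S_{k,l-1}\}$. Let $t\ge 2$ be an integer. For $0\le i\le t-3$ define $v_i:=(3(t-i),-3i)$, and let $w_0:=(0,0)$, $w_{i+1}:=w_i+v_i$ for $i=0,\dots,t-3$. For $i=0,\dots,t-2$ let $q_i:=(t+1)4^{t+1}w_i$. Define $S_t:=\bigcup_{i=0}^{t-2}\{p+q_i: p\in S_{t-i,i+2}\}$. *)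

(* Defs.v *)
From mathcomp Require Import all_boot all_order all_algebra.
Set Implicit Arguments. Unset Strict Implicit. Unset Printing Implicit Defensive.
Import Order.TTheory GRing.Theory Num.Theory.

Definition point := (int * int)%type.

Definition delta (r : nat) : int := (3 * 4 ^ (r - 1))%N.
Definition delta' (r : nat) : int := ((3 * r + 1) * 4 ^ (r - 1))%N.

Definition shift_pt (a : point) (p : point) : point :=
  ((p.1 + a.1)%R, (p.2 + a.2)%R).

Fixpoint Skl (k : nat) : nat -> seq point :=
  match k with
  | 0 => fun _ => [:: (0%R, 0%R)]
  | k'.+1 =>
    fix Sl (l : nat) : seq point :=
      match l with
      | 0 => [:: (0%R, 0%R)]
      | l'.+1 =>
        if (k'.+1 <= 2) || (l'.+1 <= 2) then [:: (0%R, 0%R)]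
        else Skl k' l'.+1 ++
             map (shift_pt (delta (k'.+1 + l'.+1 - 1),
                            delta' (k'.+1 + l'.+1 - 1))) (Sl l')
      end
  end.

Definition w (t i : nat) : point :=
  ((\sum_(j < i) (3 * (t - j))%N%:Z)%R, (- (\sum_(j < i) (3 * j)%N%:Z))%R).

Definition q (t i : nat) : point :=
  let c : int := ((t + 1) * 4 ^ (t + 1))%N in ((c * (w t i).1)%R, (c * (w t i).2)%R).

Definition St (t : nat) : seq point :=
  flatten [seq map (shift_pt (q t i)) (Skl (t - i) (i + 2)) | i <- iota 0 (t - 1)].

Local Open Scope ring_scope.

Definition in_conv_hull (p : point) (Y : seq point) : Prop :=
  exists c : nat -> rat,
    (forall i, (i < size Y)%N -> 0 <= c i) /\
    \sum_(i < size Y) c i = 1 /\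
    \sum_(i < size Y) c i * ((nth p Y i).1)%:~R = (p.1)%:~R /\
    \sum_(i < size Y) c i * ((nth p Y i).2)%:~R = (p.2)%:~R.

(* P (duplicate-free) is the vertex set of a convex polygon: no point of P
   lies in the convex hull of the other points of P. *)
Definition convex_position (P : seq point) : Prop :=
  uniq P /\ forall p, p \in P -> ~ in_conv_hull p (rem p P).

(* Main.v *)
Require Import Defs.
From mathcomp Require Import all_boot all_order all_algebra.
From mathcomp Require Import zify ring lra.
Import Order.TTheory GRing.Theory Num.Theory.
Local Open Scope ring_scope.

Lemma sum_sel (Y : seq point) (a : point) (F : point -> rat) :
  uniq Y -> a \in Y -> \sum_(x <- Y) (if x == a then F x else 0) = F a.
Proof.
move=> uY aY; rewrite (perm_big _ (perm_to_rem aY)) big_cons eqxx big1_seq; first by rewrite [X in _ + X = _]/= addr0.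
move=> x /andP[_ xr]; case: eqP xr => // ->; by rewrite mem_rem_uniqF.
Qed.

Lemma sum_ordY (Y : seq point) (p : point) (G : point -> rat) :
  \sum_(i < size Y) G (nth p Y i) = \sum_(x <- Y) G x.
Proof. by rewrite (big_nth p) big_mkord. Qed.

Definition sel (a : point) (k : rat) (x : point) : rat := if x == a then k else 0.

Lemma sum_sel4 (Y : seq point) a b c d ka kb kc kd (F : point -> rat) :
  uniq Y -> a \in Y -> b \in Y -> c \in Y -> d \in Y ->
  \sum_(x <- Y) ((sel a ka x + sel b kb x + sel c kc x + sel d kd x) * F x)
  = ka * F a + kb * F b + kc * F c + kd * F d.
Proof.
move=> uY aY bY cY dY.
under eq_bigr => x _ do rewrite !mulrDl.
rewrite !big_split /=.
have H : forall e k, e \in Y -> \sum_(x <- Y) (sel e k x * F x) = k * F e.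
  move=> e k eY; rewrite -(@sum_sel Y e (fun x => k * F x) uY eY).
  by apply: eq_bigr => x _; rewrite /sel; case: eqP => _; rewrite ?mul0r.
by rewrite !H.
Qed.

Lemma comb4 (W wa wb wc wd A B C D X : int) : W != 0 ->
  wa * A + wb * B + wc * C + wd * D = W * X ->
  (wa%:~R / W%:~R) * (A%:~R : rat) + (wb%:~R / W%:~R) * B%:~R
  + (wc%:~R / W%:~R) * C%:~R + (wd%:~R / W%:~R) * D%:~R = X%:~R.
Proof.
move=> W0 E.
have Wr : (W%:~R : rat) != 0 by rewrite intr_eq0.
have E' : (wa%:~R * A%:~R + wb%:~R * B%:~R + wc%:~R * C%:~R + wd%:~R * D%:~R : rat)
   = W%:~R * X%:~R by rewrite -!intrM -!intrD E.
have -> : (wa%:~R / W%:~R) * (A%:~R : rat) + (wb%:~R / W%:~R) * B%:~R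
  + (wc%:~R / W%:~R) * C%:~R + (wd%:~R / W%:~R) * D%:~R
  = (wa%:~R * A%:~R + wb%:~R * B%:~R + wc%:~R * C%:~R + wd%:~R * D%:~R) / W%:~R.
  by field.
by rewrite E' mulrC mulKf.
Qed.

Lemma hull4 (p : point) (Y : seq point) (a b c d : point) (wa wb wc wd W : int) :
  uniq Y -> a \in Y -> b \in Y -> c \in Y -> d \in Y ->
  0 <= wa -> 0 <= wb -> 0 <= wc -> 0 <= wd -> wa + wb + wc + wd = W -> 0 < W ->
  wa * a.1 + wb * b.1 + wc * c.1 + wd * d.1 = W * p.1 ->
  wa * a.2 + wb * b.2 + wc * c.2 + wd * d.2 = W * p.2 ->
  in_conv_hull p Y.
Proof.
move=> uY aY bY cY dY ha hb hc hd hW W0 ex ey.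
have Wr : (W%:~R : rat) != 0 by rewrite intr_eq0 gt_eqF.
pose k (z : int) : rat := z%:~R / W%:~R.
pose sl (x : point) := sel a (k wa) x + sel b (k wb) x + sel c (k wc) x + sel d (k wd) x.
exists (fun i => sl (nth p Y i)).
split; [|split; [|split]].
- move=> i _ /=; rewrite /sl /sel /k.
  have kp : forall z : int, 0 <= z -> 0 <= (z%:~R / W%:~R : rat).
    by move=> z z0; rewrite divr_ge0 // ler0z // ltW.
  by rewrite !addr_ge0 //; case: eqP => _ //; apply: kp.
- have E : \sum_(i < size Y) sl (nth p Y i) = \sum_(i < size Y) (fun x => sl x * 1) (nth p Y i).
    by apply: eq_bigr => i _; rewrite mulr1.
  rewrite E (sum_ordY Y p (fun x => sl x * 1)) /sl sum_sel4 // !mulr1 /k -!mulrDl -!intrD hW divff //.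
- rewrite (sum_ordY Y p (fun x => sl x * (x.1)%:~R)) /sl sum_sel4 // /k.
  by apply: comb4 => //; rewrite gt_eqF.
- rewrite (sum_ordY Y p (fun x => sl x * (x.2)%:~R)) /sl sum_sel4 // /k.
  by apply: comb4 => //; rewrite gt_eqF.
Qed.

Definition orient (a b c : point) : int :=
  (b.1 - a.1) * (c.2 - a.2) - (b.2 - a.2) * (c.1 - a.1).

Lemma sandwich (P : seq point) (p a c a' c' : point) :
  uniq P -> p \in P -> a \in P -> c \in P -> a' \in P -> c' \in P ->
  a.1 < p.1 -> p.1 < c.1 -> a'.1 < p.1 -> p.1 < c'.1 ->
  0 <= orient a p c -> orient a' p c' <= 0 -> in_conv_hull p (rem p P).
Proof.
move=> uP pP aP cP a'P c'P h1 h2 h3 h4 o1 o2.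
have uY := rem_uniq p uP.
have inY : forall z, z \in P -> z.1 != p.1 -> z \in rem p P.
  move=> z zP zx; apply: rem_mem => //; apply/eqP => E; by rewrite E eqxx in zx.
have aY : a \in rem p P by apply: inY => //; rewrite (lt_eqF h1).
have cY : c \in rem p P by apply: inY => //; rewrite (gt_eqF h2).
have a'Y : a' \in rem p P by apply: inY => //; rewrite (lt_eqF h3).
have c'Y : c' \in rem p P by apply: inY => //; rewrite (gt_eqF h4).
case: (eqVneq (orient a p c) 0) => O1.
- apply: (@hull4 p _ a c a' c' (c.1 - p.1) (p.1 - a.1) 0 0 (c.1 - a.1)) => //; try lia.
  + move: O1; rewrite /orient => O1; nia.
- set O2 := orient a' p c' in o2 *.
  set O1' := orient a p c in o1 O1 *.
  have O1p : 0 < O1' by rewrite lt_def O1.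
  have mO2 : 0 <= - O2 by rewrite oppr_ge0.
  apply: (@hull4 p _ a c a' c' (- O2 * (c.1 - p.1)) (- O2 * (p.1 - a.1))
            (O1' * (c'.1 - p.1)) (O1' * (p.1 - a'.1))
            (O1' * (c'.1 - a'.1) - O2 * (c.1 - a.1))) => //.
  + by apply: mulr_ge0 => //; rewrite subr_ge0 ltW.
  + by apply: mulr_ge0 => //; rewrite subr_ge0 ltW.
  + by apply: mulr_ge0; [exact: ltW | rewrite subr_ge0 ltW].
  + by apply: mulr_ge0; [exact: ltW | rewrite subr_ge0 ltW].
  + ring.
  + have h5 : 0 < O1' * (c'.1 - a'.1).
      by apply: mulr_gt0 => //; rewrite subr_gt0; apply: lt_trans h4.
    have h6 : 0 <= - O2 * (c.1 - a.1).
      by apply: mulr_ge0 => //; rewrite subr_ge0 ltW // (lt_trans h1).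
    move: h5 h6; rewrite mulNr; lia.
  + ring.
  + rewrite /O1' /O2 /orient; ring.
Qed.

Definition InvZ (M P x y : int) : Prop :=
  0 <= x /\ x < P /\ 0 <= y /\ y - (M+1)*x <= 0 /\ -P < y - (M+1)*x /\ -(2*P) < y - (M+2)*x.

Lemma invA (M P x y : int) : 0 <= M -> 0 < P -> InvZ M P x y -> InvZ (M+1) (4*P) x y.
Proof. rewrite /InvZ => M0 P0 [h1 [h2 [h3 [h4 [h5 h6]]]]]; nia. Qed.

Lemma invB (M P x y : int) : 0 <= M -> 0 < P -> InvZ M P x y ->
  InvZ (M+1) (4*P) (x + 3*P) (y + (3*M+4)*P).
Proof. rewrite /InvZ => M0 P0 [h1 [h2 [h3 [h4 [h5 h6]]]]]; nia. Qed.

Lemma cross (M P xa ya xb yb : int) : 0 <= M -> 0 < P -> InvZ M P xa ya -> InvZ M P xb yb ->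
  0 < xb + 3*P - xa /\ (M+1)*(xb + 3*P - xa) < yb + (3*M+4)*P - ya /\
  yb + (3*M+4)*P - ya < (M+2)*(xb + 3*P - xa).
Proof. rewrite /InvZ => M0 P0 [h1 [h2 [h3 [h4 [h5 h6]]]]] [g1 [g2 [g3 [g4 [g5 g6]]]]]; nia. Qed.

Arguments cross [M P xa ya xb yb].

Lemma slope_up (N : nat) (x1 x2 y1 y2 : int) : x1 < x2 ->
  y2 - y1 < (N%:Z + 1) * (x2 - x1) -> y2 - y1 < (N%:Z + 1 + 1) * (x2 - x1).
Proof. nia. Qed.

Lemma h_cross (M dx dy : int) : 0 <= M -> 0 < dx -> (M+1)*dx < dy -> dy < (M+2)*dx ->
  dx < dy /\ dy < (M+1+1)*dx.
Proof. nia. Qed.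

Lemma subDD (a b s : int) : a + s - (b + s) = a - b.
Proof. ring. Qed.

Lemma Skl_base k l : (k <= 2)%N || (l <= 2)%N -> Skl k l = [:: (0,0)].
Proof.
case: k => [|k] //=; case: l => [|l] //= h.
by rewrite h.
Qed.

Lemma Skl_rec k l : (3 <= k)%N -> (3 <= l)%N ->
  Skl k l = Skl k.-1 l ++ map (shift_pt (delta (k+l-1), delta' (k+l-1))) (Skl k l.-1).
Proof.
case: k => [|k] // hk; case: l => [|l] // hl /=.
have -> : (k.+1 <= 2)%N || (l.+1 <= 2)%N = false by apply/negbTE; rewrite negb_or -!ltnNge hk hl.
by [].
Qed.

Lemma delta_eq N : delta N.+1 = 3 * (4 ^ N)%N%:Z.
Proof. by rewrite /delta subn1 /= PoszM. Qed.

Lemma delta'_eq N : delta' N.+1 = (3 * N%:Z + 4) * (4 ^ N)%N%:Z.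
Proof. rewrite /delta' subn1 /= PoszM; congr (_ * _); lia. Qed.

Definition Props (n : nat) (S : seq point) :=
  (forall p, p \in S -> InvZ n%:Z (4^n)%N%:Z p.1 p.2) /\
  (forall p q, p \in S -> q \in S -> p.1 = q.1 -> p = q) /\
  (forall p q, p \in S -> q \in S -> p.1 < q.1 ->
      q.1 - p.1 < q.2 - p.2 /\ q.2 - p.2 < (n%:Z + 1) * (q.1 - p.1)).

Lemma Props_base n : Props n [:: (0,0)].
Proof.
split; [|split].
- move=> p; rewrite inE => /eqP -> /=; rewrite /InvZ.
  have : (0 < (4 ^ n)%N%:Z) by rewrite ltz_nat expn_gt0.
  lia.
- by move=> p q; rewrite !inE => /eqP -> /eqP ->.
- by move=> p q; rewrite !inE => /eqP -> /eqP ->; rewrite ltxx.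
Qed.

Lemma Skl_props n : forall k l, (2 <= k)%N -> (2 <= l)%N -> k + l = n.+1 -> Props n (Skl k l).
Proof.
elim: n => [|N IH] k l hk hl hkl.
  by exfalso; lia.
case: (boolP ((k <= 2)%N || (l <= 2)%N)) => hb.
  by rewrite Skl_base //; apply: Props_base.
move: hb; rewrite negb_or -!ltnNge => /andP[hk3 hl3].
rewrite Skl_rec //.
have -> : (k + l - 1 = N.+1)%N by lia.
rewrite delta_eq delta'_eq.
have [IA [XA SA]] := IH k.-1 l ltac:(lia) hl ltac:(lia).
have [IB [XB SB]] := IH k l.-1 hk ltac:(lia) ltac:(lia).
set S1 := Skl k.-1 l in IA XA SA *.
set S2 := Skl k l.-1 in IB XB SB *.
set M := N%:Z.
set P := (4 ^ N)%N%:Z.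
have M0 : 0 <= M by [].
have P0 : 0 < P by rewrite ltz_nat expn_gt0.
have e1 : N.+1%:Z = M + 1 by rewrite /M; lia.
have e2 : (4 ^ N.+1)%N%:Z = 4 * P by rewrite /P expnS PoszM.
rewrite /Props e1 e2.
have memS : forall p, p \in S1 ++ map (shift_pt (3 * P, (3 * M + 4) * P)) S2 ->
   p \in S1 \/ exists2 b, b \in S2 & p = (b.1 + 3 * P, b.2 + (3 * M + 4) * P).
  move=> p; rewrite mem_cat => /orP[->|/mapP[b bS ->]]; [by left | right].
  by exists b.
split; [|split].
- move=> p /memS [pA | [b bB ->]].
  + by apply: invA => //; apply: IA.
  + by apply: invB => //; apply: IB.
- move=> p q /memS [pA | [b bB ->]] /memS [qA | [b' bB' ->]].
  + by apply: XA.
  + move=> E; have [c1 _] := cross M0 P0 (IA p pA) (IB b' bB'); move: c1; rewrite E /=; lia.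
  + move=> E; have [c1 _] := cross M0 P0 (IA q qA) (IB b bB); move: c1; rewrite -E /=; lia.
  + move=> E; have e : b.1 = b'.1 by move: E => /= /addIr.
    by rewrite (XB b b' bB bB' e).
- move=> p q /memS [pA | [b bB ->]] /memS [qA | [b' bB' ->]] /= lt.
  + have [h1 h2] := SA p q pA qA lt; split => //; exact: slope_up.
  + have [c1 [c2 c3]] := cross M0 P0 (IA p pA) (IB b' bB'); exact: h_cross.
  + have [c1 _] := cross M0 P0 (IA q qA) (IB b bB).
    by move: c1; rewrite subr_gt0 => c1; move: (lt_trans c1 lt); rewrite ltxx.
  + have lt' : b.1 < b'.1 by move: lt; rewrite ltrD2r.
    have [h1 h2] := SB b b' bB bB' lt'.
    rewrite !subDD; split => //; exact: slope_up.
Qed.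

Definition cupset (Q : seq point) := forall a b c, a \in Q -> b \in Q -> c \in Q ->
  a.1 < b.1 -> b.1 < c.1 -> 0 < orient a b c.
Definition capset (Q : seq point) := forall a b c, a \in Q -> b \in Q -> c \in Q ->
  a.1 < b.1 -> b.1 < c.1 -> orient a b c < 0.

Lemma orientE a b c : orient a b c = (b.1 - a.1) * (c.2 - b.2) - (b.2 - a.2) * (c.1 - b.1).
Proof. rewrite /orient; ring. Qed.

Lemma turn_neg (k m ux uy vx vy : int) : 0 < ux -> 0 < vx -> 0 < k ->
  0 < k * uy + m * ux -> k * vy + m * vx < 0 -> ux * vy - uy * vx < 0.
Proof. nia. Qed.

Lemma turn_pos (k m ux uy vx vy : int) : 0 < ux -> 0 < vx -> 0 < k ->
  k * uy + m * ux < 0 -> 0 < k * vy + m * vx -> 0 < ux * vy - uy * vx.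
Proof. nia. Qed.

Lemma turn_slope (s ux uy vx vy : int) : 0 < ux -> 0 < vx ->
  s * ux < uy -> vy < s * vx -> ux * vy - uy * vx < 0.
Proof. move=> h1 h2 h3 h4; apply: (@turn_neg 1 (-s)) => //; lia. Qed.

Lemma turn_slope' (s ux uy vx vy : int) : 0 < ux -> 0 < vx ->
  uy < s * ux -> s * vx < vy -> 0 < ux * vy - uy * vx.
Proof. move=> h1 h2 h3 h4; apply: (@turn_pos 1 (-s)) => //; lia. Qed.

Lemma shiftE (v p : point) : shift_pt v p = (p.1 + v.1, p.2 + v.2).
Proof. by []. Qed.

Lemma X_shift n S v p q : Props n S -> p \in map (shift_pt v) S -> q \in map (shift_pt v) S ->
  p.1 = q.1 -> p = q.
Proof.
move=> [_ [X _]] /mapP[p0 p0S ->] /mapP[q0 q0S ->] /= /addIr E.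
by rewrite (X p0 q0).
Qed.

Lemma SI_shift n S v p q : Props n S -> p \in map (shift_pt v) S -> q \in map (shift_pt v) S ->
  p.1 < q.1 -> q.1 - p.1 < q.2 - p.2 /\ q.2 - p.2 < (n%:Z + 1) * (q.1 - p.1).
Proof.
move=> [_ [_ SI]] /mapP[p0 p0S ->] /mapP[q0 q0S ->] /=; rewrite ltrD2r => lt.
by rewrite !subDD; apply: SI.
Qed.

Arguments X_shift [n S v p q].
Arguments SI_shift [n S v p q].

Lemma cross_v (M P xa ya xb yb v1 v2 : int) : 0 <= M -> 0 < P -> InvZ M P xa ya -> InvZ M P xb yb ->
  0 < (xb + (3 * P + v1)) - (xa + v1) /\
  (M+1) * ((xb + (3 * P + v1)) - (xa + v1)) < (yb + ((3 * M + 4) * P + v2)) - (ya + v2).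
Proof.
move=> M0 P0 ha hb; have [c1 [c2 _]] := cross M0 P0 ha hb.
have -> : (xb + (3 * P + v1)) - (xa + v1) = xb + 3 * P - xa by ring.
have -> : (yb + ((3 * M + 4) * P + v2)) - (ya + v2) = yb + (3 * M + 4) * P - ya by ring.
by [].
Qed.

Lemma size_split (Q : seq point) (a : pred point) :
  size Q = (size (filter a Q) + size (filter (predC a) Q))%N.
Proof. by rewrite !size_filter count_predC. Qed.

Lemma cupcap_bound n : forall k l, (2 <= k)%N -> (2 <= l)%N -> k + l = n.+1 ->
  forall v Q, uniq Q -> {subset Q <= map (shift_pt v) (Skl k l)} ->
  (cupset Q -> (size Q <= k - 1)%N) /\ (capset Q -> (size Q <= l - 1)%N).
Proof.
elim: n => [|N IH] k l hk hl hkl v Q uQ sQ.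
  by exfalso; lia.
case: (boolP ((k <= 2)%N || (l <= 2)%N)) => hb.
  move: sQ; rewrite Skl_base //= => sQ.
  have := uniq_leq_size uQ sQ; rewrite /= => h; split => _; lia.
have Pr := @Skl_props N.+1 k l hk hl hkl.
move: hb; rewrite negb_or -!ltnNge => /andP[hk3 hl3].
have PA := @Skl_props N k.-1 l ltac:(lia) hl ltac:(lia).
have PB := @Skl_props N k l.-1 hk ltac:(lia) ltac:(lia).
move: sQ; rewrite Skl_rec // map_cat -map_comp.
have -> : (k + l - 1 = N.+1)%N by lia.
rewrite delta_eq delta'_eq.
set S1 := Skl k.-1 l in PA *.
set S2 := Skl k l.-1 in PB *.
set M := N%:Z.
set P := (4 ^ N)%N%:Z.
have M0 : 0 <= M by [].
have P0 : 0 < P by rewrite ltz_nat expn_gt0.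
set v' : point := (3 * P + v.1, (3 * M + 4) * P + v.2).
have -> : map (shift_pt v \o shift_pt (3 * P, (3 * M + 4) * P)) S2 = map (shift_pt v') S2.
  by apply: eq_map => x; rewrite /= /shift_pt /= !addrA.
move=> sQ.
set A' := map (shift_pt v) S1.
set B' := map (shift_pt v') S2.
have crossAB : forall a b, a \in A' -> b \in B' -> 0 < b.1 - a.1 /\ (M + 1) * (b.1 - a.1) < b.2 - a.2.
  move=> a b /mapP[a0 a0S ->] /mapP[b0 b0S ->]; rewrite /v' /=.
  have [IA _] := PA; have [IB _] := PB.
  exact: (@cross_v _ _ _ _ _ _ v.1 v.2 M0 P0 (IA a0 a0S) (IB b0 b0S)).
set QA := filter (mem A') Q.
set QB := filter (predC (mem A')) Q.
have sz : size Q = (size QA + size QB)%N by rewrite /QA /QB; apply: size_split.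
have uQA : uniq QA by apply: filter_uniq.
have uQB : uniq QB by apply: filter_uniq.
have sQA : {subset QA <= A'} by move=> x; rewrite mem_filter => /andP[].
have sQB : {subset QB <= B'}.
  move=> x; rewrite mem_filter => /andP[/= xA /sQ]; rewrite mem_cat => /orP[xA'|//].
  by rewrite xA' in xA.
have [IA1 IA2] := IH k.-1 l ltac:(lia) hl ltac:(lia) v QA uQA sQA.
have [IB1 IB2] := IH k l.-1 hk ltac:(lia) ltac:(lia) v' QB uQB sQB.
have subQA : {subset QA <= Q} by move=> x; rewrite mem_filter => /andP[].
have subQB : {subset QB <= Q} by move=> x; rewrite mem_filter => /andP[].
split => hQ.
- have cA : cupset QA by move=> a b c /subQA ? /subQA ? /subQA ?; apply: hQ.
  have cB : cupset QB by move=> a b c /subQB ? /subQB ? /subQB ?; apply: hQ.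
  case EA: QA => [|a QA'].
    by rewrite sz EA /=; apply: IB1.
  have aA : a \in QA by rewrite EA mem_head.
  have szB : (size QB <= 1)%N.
    case EB: QB => [|b1 [|b2 QB']] //.
    exfalso.
    have b1B : b1 \in QB by rewrite EB mem_head.
    have b2B : b2 \in QB by rewrite EB !inE eqxx orbT.
    have ne : b1 != b2 by move: uQB; rewrite EB /= inE negb_or => /andP[/andP[]].
    have key : forall c1 c2, c1 \in QB -> c2 \in QB -> c1.1 < c2.1 -> False.
      move=> c1 c2 c1B c2B lt.
      have [u1 u2] := crossAB a c1 (sQA a aA) (sQB c1 c1B).
      have [_ s2] := SI_shift PB (sQB c1 c1B) (sQB c2 c2B) lt.
      have ac1 : a.1 < c1.1 by rewrite -subr_gt0.
      have := hQ a c1 c2 (subQA a aA) (subQB c1 c1B) (subQB c2 c2B) ac1 lt.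
      rewrite orientE; apply/negP; rewrite -leNgt; apply: ltW.
      apply: (@turn_slope (M + 1)) => //; by rewrite subr_gt0.
    case: (ltgtP b1.1 b2.1) => lt.
    + exact: key lt.
    + exact: key lt.
    + by move: ne; rewrite (X_shift PB (sQB b1 b1B) (sQB b2 b2B) lt) eqxx.
  have := IA1 cA; lia.
- have cA : capset QA by move=> a b c /subQA ? /subQA ? /subQA ?; apply: hQ.
  have cB : capset QB by move=> a b c /subQB ? /subQB ? /subQB ?; apply: hQ.
  case EB: QB => [|b QB'].
    by rewrite sz EB /= addn0; apply: IA2.
  have bB : b \in QB by rewrite EB mem_head.
  have szA : (size QA <= 1)%N.
    case EA: QA => [|a1 [|a2 QA']] //.
    exfalso.
    have a1A : a1 \in QA by rewrite EA mem_head.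
    have a2A : a2 \in QA by rewrite EA !inE eqxx orbT.
    have ne : a1 != a2 by move: uQA; rewrite EA /= inE negb_or => /andP[/andP[]].
    have key : forall c1 c2, c1 \in QA -> c2 \in QA -> c1.1 < c2.1 -> False.
      move=> c1 c2 c1A c2A lt.
      have [u1 u2] := crossAB c2 b (sQA c2 c2A) (sQB b bB).
      have [_ s2] := SI_shift PA (sQA c1 c1A) (sQA c2 c2A) lt.
      have c2b : c2.1 < b.1 by rewrite -subr_gt0.
      have := hQ c1 c2 b (subQA c1 c1A) (subQA c2 c2A) (subQB b bB) lt c2b.
      rewrite orientE; apply/negP; rewrite -leNgt; apply: ltW.
      apply: (@turn_slope' (M + 1)) => //; by rewrite subr_gt0.
    case: (ltgtP a1.1 a2.1) => lt.
    + exact: key lt.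
    + exact: key lt.
    + by move: ne; rewrite (X_shift PA (sQA a1 a1A) (sQA a2 a2A) lt) eqxx.
  have := IB2 cB; lia.
Qed.

Lemma inv_bnd (T P x y : int) : 0 <= T -> InvZ (T+1) P x y -> 0 <= x /\ x < P /\ 0 <= y /\ y < (T+2)*P.
Proof. rewrite /InvZ => T0 [h1 [h2 [h3 [h4 _]]]]; nia. Qed.

Lemma BX_arith (T P c x0 y0 x1 y1 Xi Xj Yi Yj : int) : 2 <= T -> 0 < P -> c = (T+1)*P ->
  0 <= x0 -> x0 < P -> 0 <= y0 -> y0 < (T+2)*P ->
  0 <= x1 -> x1 < P -> 0 <= y1 -> y1 < (T+2)*P ->
  1 <= Xj - Xi -> 3 * T <= (Xj - Xi) + (Yj - Yi) ->
  0 < (x1 + c * Xj) - (x0 + c * Xi) /\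
  (y1 + c * (- Yj)) - (y0 + c * (- Yi)) < (x1 + c * Xj) - (x0 + c * Xi).
Proof.
move=> T2 P0 -> *.
have h1 : (T+1)*P <= (T+1)*P*(Xj - Xi) by nia.
have h2 : (T+1)*P*(3*T) <= (T+1)*P*((Xj - Xi) + (Yj - Yi)) by nia.
have h3 : (T+3)*P <= (T+1)*P*(3*T) by nia.
have h4 : 0 <= T * P by nia.
split; nia.
Qed.

Lemma mul_diff (a u v B : int) : 0 < a -> 0 <= u -> u < B -> 0 <= v -> v < B ->
  -(a*B) < a*(u-v) /\ a*(u-v) < a*B.
Proof. move=> *; split; nia. Qed.

Lemma BT_aux (T J : int) : 2 <= T -> 1 <= J -> J <= T - 2 ->
  0 < 3*T*(T+1) - (2*T-2*J+1)*(T+2) - (2*J-1).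
Proof. nia. Qed.

Lemma mul_le3 (c a b : int) : 0 <= c -> a <= b -> c * a <= c * b.
Proof. nia. Qed.

Arguments mul_diff [a u v B].
Arguments BT_aux [T J].
Arguments mul_le3 [c a b].

Lemma BT_arith (T P c J x0 y0 x1 y1 Xi Xj Yi Yj : int) : 2 <= T -> 0 < P -> c = (T+1)*P ->
  1 <= J -> J <= T - 2 ->
  0 <= x0 -> x0 < P -> 0 <= y0 -> y0 < (T+2)*P ->
  0 <= x1 -> x1 < P -> 0 <= y1 -> y1 < (T+2)*P ->
  (3 * T <= (2*J-1) * (Xj - Xi) - (2*T-2*J+1) * (Yj - Yi) ->
  0 < (2*T-2*J+1) * ((y1 + c * (- Yj)) - (y0 + c * (- Yi))) + (2*J-1) * ((x1 + c * Xj) - (x0 + c * Xi)))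
  /\
  ((2*J-1) * (Xj - Xi) - (2*T-2*J+1) * (Yj - Yi) <= - (3 * T) ->
  (2*T-2*J+1) * ((y1 + c * (- Yj)) - (y0 + c * (- Yi))) + (2*J-1) * ((x1 + c * Xj) - (x0 + c * Xi)) < 0).
Proof.
move=> T2 P0 -> J1 J2 x00 x0P y00 y0P x10 x1P y10 y1P.
set E := (2*J-1) * (Xj - Xi) - (2*T-2*J+1) * (Yj - Yi).
have -> : (2*T-2*J+1) * ((y1 + (T+1)*P * (- Yj)) - (y0 + (T+1)*P * (- Yi))) + (2*J-1) * ((x1 + (T+1)*P * Xj) - (x0 + (T+1)*P * Xi))
   = (2*T-2*J+1) * (y1 - y0) + (2*J-1) * (x1 - x0) + (T+1)*P*E by rewrite /E; ring.
have al : 0 < 2*T-2*J+1 by lia.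
have be : 0 < 2*J-1 by lia.
have [ha hb] := mul_diff al y10 y1P y00 y0P.
have [hc hd] := mul_diff be x10 x1P x00 x0P.
have k := BT_aux T2 J1 J2.
have k' := mulr_gt0 P0 k.
have he : (2*T-2*J+1) * ((T+2)*P) + (2*J-1) * P < (T+1)*P*(3*T).
  move: k'; clear; lia.
have cp : 0 <= (T+1)*P by apply: mulr_ge0; lia.
split => hE.
- have := mul_le3 cp hE; move: ha hb hc hd he; clear; lia.
- have := mul_le3 cp hE; move: ha hb hc hd he; clear; lia.
Qed.

Definition Sx (t i : nat) : int := \sum_(j < i) (3 * (t - j))%N%:Z.
Definition Sy (t i : nat) : int := \sum_(j < i) (3 * j)%N%:Z.

Lemma SxS t i : Sx t i.+1 = Sx t i + (3 * (t - i))%N%:Z.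
Proof. by rewrite /Sx big_ord_recr. Qed.
Lemma SyS t i : Sy t i.+1 = Sy t i + (3 * i)%N%:Z.
Proof. by rewrite /Sy big_ord_recr. Qed.
Lemma Sx0 t : Sx t 0 = 0. Proof. by rewrite /Sx big_ord0. Qed.
Lemma Sy0 t : Sy t 0 = 0. Proof. by rewrite /Sy big_ord0. Qed.

Lemma Sxy t i : (i <= t)%N -> Sx t i + Sy t i = 3 * t%:Z * i%:Z.
Proof.
elim: i => [|i IH] hi; first by rewrite Sx0 Sy0; lia.
rewrite SxS SyS.
have := IH ltac:(lia).
move: hi; clear; lia.
Qed.

Lemma Sx_inc t i j : (i < j)%N -> (j <= t)%N -> 1 <= Sx t j - Sx t i.
Proof.
elim: j => [|j IH] // hij hj.
rewrite SxS.
case: (boolP (i < j)%N) => h.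
  have := IH h ltac:(lia); move: hj; lia.
have -> : j = i by lia.
move: hj; lia.
Qed.

Definition Phi (t J i : nat) : int :=
  (2 * J%:Z - 1) * Sx t i - (2 * t%:Z - 2 * J%:Z + 1) * Sy t i.

Lemma PhiS t J i : (i < t)%N -> Phi t J i.+1 = Phi t J i + 3 * t%:Z * (2 * J%:Z - 1 - 2 * i%:Z).
Proof.
move=> h; rewrite /Phi SxS SyS.
have -> : (3 * (t - i))%N%:Z = 3 * (t%:Z - i%:Z) by lia.
have -> : (3 * i)%N%:Z = 3 * i%:Z by lia.
ring.
Qed.

Lemma Phi_up t J i : (i < J)%N -> (J <= t)%N -> 3 * t%:Z <= Phi t J J - Phi t J i.
Proof.
move=> hiJ hJt.
have gen : forall d, (i + d <= J)%N -> 3 * t%:Z * d%:Z <= Phi t J (i + d) - Phi t J i.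
  elim => [|d IH] h; first by rewrite addn0; lia.
  rewrite addnS PhiS; last by lia.
  have := IH ltac:(lia).
  have : 3 * t%:Z <= 3 * t%:Z * (2 * J%:Z - 1 - 2 * (i + d)%N%:Z).
    have : 1 <= 2 * J%:Z - 1 - 2 * (i + d)%N%:Z by lia.
    have : 0 <= t%:Z by [].
    generalize (t%:Z) (2 * J%:Z - 1 - 2 * (i + d)%N%:Z) => T D; nia.
  lia.
have := gen (J - i)%N ltac:(lia).
have -> : (i + (J - i))%N = J by lia.
have : 3 * t%:Z <= 3 * t%:Z * (J - i)%N%:Z.
  have : 1 <= (J - i)%N%:Z by lia.
  have : 0 <= t%:Z by [].
  generalize (t%:Z) ((J - i)%N%:Z) => T D; nia.
lia.
Qed.

Lemma Phi_down t J k : (J < k)%N -> (k <= t)%N -> Phi t J k - Phi t J J <= - (3 * t%:Z).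
Proof.
move=> hJk hkt.
have gen : forall d, (J + d <= k)%N -> Phi t J (J + d) - Phi t J J <= - (3 * t%:Z * d%:Z).
  elim => [|d IH] h; first by rewrite addn0; lia.
  rewrite addnS PhiS; last by lia.
  have := IH ltac:(lia).
  have : 3 * t%:Z * (2 * J%:Z - 1 - 2 * (J + d)%N%:Z) <= - (3 * t%:Z).
    have : 2 * J%:Z - 1 - 2 * (J + d)%N%:Z <= -1 by lia.
    have : 0 <= t%:Z by [].
    generalize (t%:Z) (2 * J%:Z - 1 - 2 * (J + d)%N%:Z) => T D; nia.
  lia.
have := gen (k - J)%N ltac:(lia).
have -> : (J + (k - J))%N = k by lia.
have : 3 * t%:Z <= 3 * t%:Z * (k - J)%N%:Z.
  have : 1 <= (k - J)%N%:Z by lia.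
  have : 0 <= t%:Z by [].
  generalize (t%:Z) ((k - J)%N%:Z) => T D; nia.
lia.
Qed.

Definition Blk (t i : nat) : seq point := [seq shift_pt (q t i) x | x <- Skl (t - i) (i + 2)].

Lemma St_blk t p : p \in St t -> exists2 i, (i < t - 1)%N & p \in Blk t i.
Proof.
rewrite /St => /flattenP [s /mapP[i iI ->] ps]; exists i => //.
by move: iI; rewrite mem_iota; lia.
Qed.

Lemma blk_St t i p : (i < t - 1)%N -> p \in Blk t i -> p \in St t.
Proof.
move=> hi pB; apply/flattenP; exists (Blk t i) => //; apply/mapP; exists i => //.
rewrite mem_iota; lia.
Qed.

Lemma Blk_props t i : (2 <= t)%N -> (i < t - 1)%N -> Props t.+1 (Skl (t - i) (i + 2)).
Proof. move=> ht hi; apply: Skl_props; lia. Qed.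

Lemma Blk_coord t i p : (2 <= t)%N -> (i < t - 1)%N -> p \in Blk t i ->
  exists x0 y0, [/\ 0 <= x0, x0 < (4 ^ t.+1)%N%:Z, 0 <= y0, y0 < (t%:Z + 2) * (4 ^ t.+1)%N%:Z &
    p = (x0 + ((t + 1) * 4 ^ (t + 1))%N%:Z * Sx t i, y0 + ((t + 1) * 4 ^ (t + 1))%N%:Z * (- Sy t i))].
Proof.
move=> ht hi /mapP[p0 p0S ->].
have [I _] := @Blk_props t i ht hi.
have := I p0 p0S.
have -> : t.+1%:Z = t%:Z + 1 by lia.
move=> /(@inv_bnd t%:Z _ _ _ isT) [h1 [h2 [h3 h4]]].
exists p0.1, p0.2; split => //.
Qed.

Arguments Blk_coord [t i p].
Arguments BX_arith [T P c x0 y0 x1 y1 Xi Xj Yi Yj].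
Arguments BT_arith [T P c J x0 y0 x1 y1 Xi Xj Yi Yj].

Lemma cE t : ((t + 1) * 4 ^ (t + 1))%N%:Z = (t%:Z + 1) * (4 ^ t.+1)%N%:Z.
Proof. rewrite addn1 PoszM; congr (_ * _); lia. Qed.

Lemma P4pos t : 0 < (4 ^ t.+1)%N%:Z.
Proof. by rewrite ltz_nat expn_gt0. Qed.

Lemma BX t i j p q : (2 <= t)%N -> (i < j)%N -> (j < t - 1)%N -> p \in Blk t i -> q \in Blk t j ->
  p.1 < q.1 /\ q.2 - p.2 < q.1 - p.1.
Proof.
move=> ht hij hj pB qB.
have [x0 [y0 [a1 a2 a3 a4 ->]]] := Blk_coord ht (ltn_trans hij hj) pB.
have [x1 [y1 [b1 b2 b3 b4 ->]]] := Blk_coord ht hj qB.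
rewrite /= -subr_gt0.
have T2 : 2 <= t%:Z by lia.
have hx := @Sx_inc t i j hij ltac:(lia).
have hxy : 3 * t%:Z <= (Sx t j - Sx t i) + (Sy t j - Sy t i).
  have -> : (Sx t j - Sx t i) + (Sy t j - Sy t i) = (Sx t j + Sy t j) - (Sx t i + Sy t i) by ring.
  rewrite !Sxy; try lia.
  have : 1 <= j%:Z - i%:Z by lia.
  have : 0 <= t%:Z by [].
  generalize (t%:Z) (j%:Z) (i%:Z) => T J I; nia.
exact: (BX_arith T2 (P4pos t) (cE t) a1 a2 a3 a4 b1 b2 b3 b4 hx hxy).
Qed.

Lemma BT1 t i j p q : (2 <= t)%N -> (1 <= j)%N -> (i < j)%N -> (j < t - 1)%N ->
  p \in Blk t i -> q \in Blk t j ->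
  0 < (2 * t%:Z - 2 * j%:Z + 1) * (q.2 - p.2) + (2 * j%:Z - 1) * (q.1 - p.1).
Proof.
move=> ht hj1 hij hj pB qB.
have [x0 [y0 [a1 a2 a3 a4 ->]]] := Blk_coord ht (ltn_trans hij hj) pB.
have [x1 [y1 [b1 b2 b3 b4 ->]]] := Blk_coord ht hj qB.
rewrite /=.
have T2 : 2 <= t%:Z by lia.
have J1 : 1 <= j%:Z by lia.
have J2 : j%:Z <= t%:Z - 2 by lia.
have hE := @Phi_up t j i hij ltac:(lia).
have [H _] := BT_arith (Xi := Sx t i) (Xj := Sx t j) (Yi := Sy t i) (Yj := Sy t j)
   T2 (P4pos t) (cE t) J1 J2 a1 a2 a3 a4 b1 b2 b3 b4.
apply: H; move: hE; rewrite /Phi.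
have -> : (2 * j%:Z - 1) * Sx t j - (2 * t%:Z - 2 * j%:Z + 1) * Sy t j -
  ((2 * j%:Z - 1) * Sx t i - (2 * t%:Z - 2 * j%:Z + 1) * Sy t i) =
  (2 * j%:Z - 1) * (Sx t j - Sx t i) - (2 * t%:Z - 2 * j%:Z + 1) * (Sy t j - Sy t i) by ring.
by [].
Qed.

Lemma BT2 t j k q r : (2 <= t)%N -> (1 <= j)%N -> (j < k)%N -> (k < t - 1)%N ->
  q \in Blk t j -> r \in Blk t k ->
  (2 * t%:Z - 2 * j%:Z + 1) * (r.2 - q.2) + (2 * j%:Z - 1) * (r.1 - q.1) < 0.
Proof.
move=> ht hj1 hjk hk qB rB.
have [x0 [y0 [a1 a2 a3 a4 ->]]] := Blk_coord ht (ltn_trans hjk hk) qB.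
have [x1 [y1 [b1 b2 b3 b4 ->]]] := Blk_coord ht hk rB.
rewrite /=.
have T2 : 2 <= t%:Z by lia.
have J1 : 1 <= j%:Z by lia.
have J2 : j%:Z <= t%:Z - 2 by lia.
have hE := @Phi_down t j k hjk ltac:(lia).
have [_ H] := BT_arith (Xi := Sx t j) (Xj := Sx t k) (Yi := Sy t j) (Yj := Sy t k)
   T2 (P4pos t) (cE t) J1 J2 a1 a2 a3 a4 b1 b2 b3 b4.
apply: H; move: hE; rewrite /Phi.
have -> : (2 * j%:Z - 1) * Sx t k - (2 * t%:Z - 2 * j%:Z + 1) * Sy t k -
  ((2 * j%:Z - 1) * Sx t j - (2 * t%:Z - 2 * j%:Z + 1) * Sy t j) =
  (2 * j%:Z - 1) * (Sx t k - Sx t j) - (2 * t%:Z - 2 * j%:Z + 1) * (Sy t k - Sy t j) by ring.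
by [].
Qed.

Lemma BI t i p q : (2 <= t)%N -> (i < t - 1)%N -> p \in Blk t i -> q \in Blk t i ->
  p.1 < q.1 -> q.1 - p.1 < q.2 - p.2.
Proof.
move=> ht hi pB qB lt; have [h _] := SI_shift (@Blk_props t i ht hi) pB qB lt; exact: h.
Qed.

Lemma BXI t i p q : (2 <= t)%N -> (i < t - 1)%N -> p \in Blk t i -> q \in Blk t i ->
  p.1 = q.1 -> p = q.
Proof. move=> ht hi pB qB; exact: X_shift (@Blk_props t i ht hi) pB qB. Qed.

Lemma Bbound t i Q : (2 <= t)%N -> (i < t - 1)%N -> uniq Q -> {subset Q <= Blk t i} ->
  (cupset Q -> (size Q <= t - i - 1)%N) /\ (capset Q -> (size Q <= i + 1)%N).
Proof.
move=> ht hi uQ sQ.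
have [h1 h2] := @cupcap_bound t.+1 (t - i) (i + 2) ltac:(lia) ltac:(lia) ltac:(lia) (q t i) Q uQ sQ.
split => H; [exact: h1 | have := h2 H; lia].
Qed.

Lemma exists_min (s : seq point) : s != [::] -> exists2 m, m \in s & forall p, p \in s -> m.1 <= p.1.
Proof.
elim: s => [//|a s IH] _.
case: (eqVneq s [::]) => [->|ne].
  by exists a => [|p]; rewrite ?inE // => /eqP ->.
have [m ms hm] := IH ne.
case: (leP a.1 m.1) => h.
  exists a; first by rewrite mem_head.
  move=> p; rewrite inE => /orP[/eqP -> //|/hm]; exact: le_trans.
exists m; first by rewrite inE ms orbT.
move=> p; rewrite inE => /orP[/eqP ->|/hm //]; exact: ltW.
Qed.

Lemma exists_max (s : seq point) : s != [::] -> exists2 m, m \in s & forall p, p \in s -> p.1 <= m.1.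
Proof.
elim: s => [//|a s IH] _.
case: (eqVneq s [::]) => [->|ne].
  by exists a => [|p]; rewrite ?inE // => /eqP ->.
have [m ms hm] := IH ne.
case: (leP m.1 a.1) => h.
  exists a; first by rewrite mem_head.
  move=> p; rewrite inE => /orP[/eqP -> //|/hm] hp; exact: le_trans hp h.
exists m; first by rewrite inE ms orbT.
move=> p; rewrite inE => /orP[/eqP ->|/hm //]; exact: ltW.
Qed.

Arguments sandwich [P p a c a' c'].
Arguments BX [t i j p q].
Arguments BXI [t i p q].
Arguments BI [t i p q].
Arguments BT1 [t i j p q].
Arguments BT2 [t j k q r].
Arguments Bbound [t i Q].

Arguments blk_St [t i p].

Lemma conv_sign P p a c a' c' : convex_position P -> p \in P -> a \in P -> c \in P -> a' \in P -> c' \in P ->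
  a.1 < p.1 -> p.1 < c.1 -> a'.1 < p.1 -> p.1 < c'.1 ->
  0 <= orient a p c -> orient a' p c' <= 0 -> False.
Proof.
move=> [uP H] pP aP cP a'P c'P h1 h2 h3 h4 o1 o2.
exact: (H p pP (sandwich uP pP aP cP a'P c'P h1 h2 h3 h4 o1 o2)).
Qed.

Definition blk (t : nat) (p : point) : nat := find (fun i => p \in Blk t i) (iota 0 (t - 1)).

Lemma blkP t p : p \in St t -> (blk t p < t - 1)%N /\ p \in Blk t (blk t p).
Proof.
move=> /St_blk [i hi pB].
have hs : has (fun i => p \in Blk t i) (iota 0 (t - 1)).
  by apply/hasP; exists i => //; rewrite mem_iota; lia.
have := hs; rewrite has_find size_iota => lt; split => //.
have := nth_find 0 hs; rewrite nth_iota // add0n; by [].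
Qed.

Arguments blkP [t p].

Lemma blk_eq t p i : (2 <= t)%N -> (i < t - 1)%N -> p \in Blk t i -> blk t p = i.
Proof.
move=> ht hi pB.
have [hj pB'] := blkP (blk_St hi pB).
case: (ltngtP (blk t p) i) => // h.
- by have [] := BX ht h hi pB' pB; rewrite ltxx.
- by have [] := BX ht h hj pB pB'; rewrite ltxx.
Qed.

Lemma xinjSt t p q : (2 <= t)%N -> p \in St t -> q \in St t -> p.1 = q.1 -> p = q.
Proof.
move=> ht pS qS E.
have [hi pB] := blkP pS; have [hj qB] := blkP qS.
case: (ltngtP (blk t p) (blk t q)) => h.
- by have [] := BX ht h hj pB qB; rewrite E ltxx.
- by have [] := BX ht h hi qB pB; rewrite E ltxx.
- by rewrite h in pB; apply: (BXI ht hj pB qB).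
Qed.

Arguments blk_eq [t p i].
Arguments xinjSt [t p q].
Arguments conv_sign [P p a c a' c'].

Arguments exists_min [s].
Arguments exists_max [s].

Lemma sub_le (s1 s2 : seq point) : uniq s1 -> {subset s1 <= s2} -> (size s1 <= size s2)%N.
Proof. exact: uniq_leq_size. Qed.

Theorem theorem3 (t : nat) (P : seq point) :
  (2 <= t)%N -> {subset P <= St t} -> convex_position P -> (size P <= t - 1)%N.
Proof.
move=> ht sP cP.
have [uP _] := cP.
case: (leqP (size P) 1) => hs; first lia.
have Pne : P != [::] by case: P hs {uP sP cP}.
have [L LP hL] := exists_min Pne.
have [R RP hR] := exists_max Pne.
have xinj : forall p q, p \in P -> q \in P -> p.1 = q.1 -> p = q.
  by move=> p q pP qP; apply: xinjSt ht (sP p pP) (sP q qP).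
have LR : L.1 < R.1.
  rewrite lt_def hR // andbT; apply/negP => /eqP E.
  have : (size P <= size [:: L])%N.
    apply: sub_le uP _ => p pP; rewrite inE; apply/eqP; apply: xinj => //.
    by apply/eqP; rewrite eq_le hL // andbT -E hR.
  by rewrite /=; clear -hs; lia.
have inter : forall p, p \in P -> p != L -> p != R -> L.1 < p.1 /\ p.1 < R.1.
  move=> p pP pL pR; split.
  - rewrite lt_def hL // andbT; apply/negP => /eqP E.
    by move: pL; rewrite (xinj p L) ?eqxx.
  - rewrite lt_def hR // andbT; apply/negP => /eqP E.
    by move: pR; rewrite (xinj p R) ?eqxx.
have LnR : L != R by apply/eqP => E; move: LR; rewrite E ltxx.
pose aU := fun x => (x == L) || (x == R) || (orient L x R < 0).
pose aL := fun x => (x == L) || (x == R) || (0 < orient L x R).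
set U := filter aU P.
set Lo := filter aL P.
have hcount : (size P + 2 <= size U + size Lo)%N.
  rewrite /U /Lo !size_filter -count_predUI.
  have -> : count (predU aU aL) P = size P.
    rewrite -count_predT; apply: eq_in_count => p pP /=.
    rewrite /aU /aL.
    case: (eqVneq p L) => //= pL; case: (eqVneq p R) => //= pR.
    have [h1 h2] := inter p pP pL pR.
    case: (ltgtP (orient L p R) 0) => // E.
    exfalso; apply: (conv_sign cP pP LP RP LP RP h1 h2 h1 h2); rewrite E //.
  have : (2 <= count (predI aU aL) P)%N.
    rewrite -size_filter.
    have uLR : uniq [:: L; R] by rewrite /= inE LnR.
    have := @sub_le [:: L; R] (filter (predI aU aL) P) uLR.
    move=> H; apply: H => x.
    by rewrite !inE mem_filter /= /aU /aL => /orP[]/eqP ->; rewrite ?eqxx ?orbT ?LP ?RP.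
  clear; lia.
have sU : {subset U <= P} by move=> x; rewrite mem_filter => /andP[].
have sLo : {subset Lo <= P} by move=> x; rewrite mem_filter => /andP[].
have LU : L \in U by rewrite mem_filter LP /aU eqxx.
have RLo : R \in Lo by rewrite mem_filter RP /aL eqxx orbT.
have LLo : L \in Lo by rewrite mem_filter LP /aL eqxx.
have capU : capset U.
  move=> a b c aU' bU cU h1 h2.
  have bL : b != L by apply/eqP => E; move: (hL a (sU a aU')); rewrite -E leNgt h1.
  have bR : b != R by apply/eqP => E; move: (hR c (sU c cU)); rewrite -E leNgt h2.
  have [i1 i2] := inter b (sU b bU) bL bR.
  have ob : orient L b R < 0 by move: bU; rewrite mem_filter /aU (negbTE bL) (negbTE bR) => /andP[].
  rewrite ltNge; apply/negP => o.
  exact: (conv_sign cP (sU b bU) (sU a aU') (sU c cU) LP RP h1 h2 i1 i2 o (ltW ob)).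
have cupLo : cupset Lo.
  move=> a b c aU' bU cU h1 h2.
  have bL : b != L by apply/eqP => E; move: (hL a (sLo a aU')); rewrite -E leNgt h1.
  have bR : b != R by apply/eqP => E; move: (hR c (sLo c cU)); rewrite -E leNgt h2.
  have [i1 i2] := inter b (sLo b bU) bL bR.
  have ob : 0 < orient L b R by move: bU; rewrite mem_filter /aL (negbTE bL) (negbTE bR) => /andP[].
  rewrite ltNge; apply/negP => o.
  exact: (conv_sign cP (sLo b bU) LP RP (sLo a aU') (sLo c cU) i1 i2 h1 h2 (ltW ob) o).
set iL := blk t L.
set iR := blk t R.
have [hiL LB] := blkP (sP L LP).
have [hiR RB] := blkP (sP R RP).
have brange : forall p, p \in P -> (iL <= blk t p <= iR)%N.
  move=> p pP; have [hp pB] := blkP (sP p pP).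
  apply/andP; split; rewrite leqNgt; apply/negP => h.
  - have [h1 _] := BX ht h hiL pB LB; move: (hL p pP); rewrite leNgt h1.
    by [].
  - have [h1 _] := BX ht h hp RB pB; move: (hR p pP); rewrite leNgt h1.
    by [].
have iLR : (iL <= iR)%N by have := brange L LP; case/andP => _.
have bU : (size U <= iR + 1)%N.
  set U1 := filter (mem (Blk t iL)) U.
  set U2 := filter (predC (mem (Blk t iL))) U.
  have sz : size U = (size U1 + size U2)%N by rewrite /U1 /U2; apply: size_split.
  have uU : uniq U by apply: filter_uniq.
  have b1 : (size U1 <= iL + 1)%N.
    have sU1 : {subset U1 <= Blk t iL} by move=> x; rewrite mem_filter => /andP[].
    have [_ H] := Bbound ht hiL (filter_uniq _ uU) sU1.
    have sU1' : {subset U1 <= U} by move=> x; rewrite /U1 mem_filter => /andP[].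
    apply: H => a b c /sU1' a1 /sU1' b1' /sU1' c1; exact: (capU a b c a1 b1' c1).
  have b2 : (size U2 <= iR - iL)%N.
    have sU2 : {subset U2 <= U} by move=> x; rewrite mem_filter => /andP[].
    have inj : {in U2 &, injective (blk t)}.
      move=> x y xU y2 E; apply/eqP; apply/negP => /negP ne.
      have [hx xB] := blkP (sP x (sU x (sU2 x xU))).
      have [hy yB] := blkP (sP y (sU y (sU2 y y2))).
      have gx : (iL < blk t x)%N.
        have := brange x (sU x (sU2 x xU)); case/andP => h _.
        rewrite ltn_neqAle h andbT; apply/eqP => E'.
        by move: xU; rewrite mem_filter /= E' xB.
      rewrite -E in yB.
      have key : forall u v, u \in U2 -> v \in U2 -> u \in Blk t (blk t x) -> v \in Blk t (blk t x) -> u.1 < v.1 -> False.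
        move=> u v uU2 vU2 uB vB lt.
        have [l1 l2] := BX ht gx hx LB uB.
        have s2 := BI ht hx uB vB lt.
        have := capU L u v LU (sU2 u uU2) (sU2 v vU2) l1 lt.
        rewrite orientE; apply/negP; rewrite -leNgt; apply: ltW.
        apply: (@turn_slope' 1) => //; rewrite ?subr_gt0 ?mul1r //.
      case: (ltgtP x.1 y.1) => lt.
      + exact: key xU y2 xB yB lt.
      + exact: key y2 xU yB xB lt.
      + by move: ne; rewrite (BXI ht hx xB yB lt) eqxx.
    have := @uniq_leq_size _ (map (blk t) U2) (iota iL.+1 (iR - iL)).
    rewrite size_map size_iota; apply.
      by rewrite (map_inj_in_uniq inj); apply: filter_uniq.
    move=> j /mapP[x xU ->]; rewrite mem_iota.
    have [hx xB] := blkP (sP x (sU x (sU2 x xU))).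
    have := brange x (sU x (sU2 x xU)); case/andP => h1 h2.
    have : blk t x != iL.
      by apply/eqP => E'; move: xU; rewrite mem_filter /= -E' xB.
    clear -h1 h2; lia.
  clear -sz b1 b2 iLR; lia.
have bLo : (size Lo <= t - iR)%N.
  set L1 := filter (mem (Blk t iR)) Lo.
  set L2 := filter (predC (mem (Blk t iR))) Lo.
  have sz : size Lo = (size L1 + size L2)%N by rewrite /L1 /L2; apply: size_split.
  have uLo : uniq Lo by apply: filter_uniq.
  have b1 : (size L1 <= t - iR - 1)%N.
    have sL1 : {subset L1 <= Blk t iR} by move=> x; rewrite mem_filter => /andP[].
    have [H _] := Bbound ht hiR (filter_uniq _ uLo) sL1.
    have sL1' : {subset L1 <= Lo} by move=> x; rewrite /L1 mem_filter => /andP[].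
    apply: H => a b c /sL1' a1 /sL1' b1' /sL1' c1; exact: (cupLo a b c a1 b1' c1).
  have b2 : (size L2 <= 1)%N.
    have := @sub_le L2 [:: L] (filter_uniq _ uLo).
    apply => x; rewrite mem_filter /= inE => /andP[xnB xLo].
    case: (eqVneq x L) => // xL; exfalso.
    have xP := sLo x xLo.
    have [hx xB] := blkP (sP x xP).
    have xR : x != R by apply/eqP => E; move: xnB; rewrite E RB.
    have [i1 i2] := inter x xP xL xR.
    have := brange x xP; case/andP => g1 g2.
    have g3 : (blk t x < iR)%N.
      rewrite ltn_neqAle g2 andbT; apply/eqP => E; by move: xnB; rewrite -E xB.
    have := cupLo L x R LLo xLo RLo i1 i2.
    rewrite orientE; apply/negP; rewrite -leNgt; apply: ltW.
    case: (eqVneq (blk t x) iL) => E.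
    + rewrite E in xB g3.
      have s1 := BI ht hiL LB xB i1.
      have [_ s2] := BX ht g3 hiR xB RB.
      apply: (@turn_slope 1) => //; rewrite ?subr_gt0 ?mul1r //.
    + have gx : (iL < blk t x)%N by rewrite ltn_neqAle eq_sym E g1.
      have j1 : (1 <= blk t x)%N by clear -gx; lia.
      have t1 := BT1 ht j1 gx hx LB xB.
      have t2 := BT2 ht j1 g3 hiR xB RB.
      apply: (@turn_neg (2 * t%:Z - 2 * (blk t x)%:Z + 1) (2 * (blk t x)%:Z - 1)) => //;
        rewrite ?subr_gt0 //; clear -hx; lia.
  clear -sz b1 b2 hiR; lia.
clear -hcount bU bLo hiR; lia.
Qed.
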